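(* Let $n\ge3$ be odd. Then the slope of the right-most edge of the Newton polygon of $R_{(n,2)}(x)$ with respect to the prime $3$ is strictly less than $\frac12$ if $3\mid n+1$, and is equal to $\frac12$ if $3\nmid n+1$.
   Context: $\mathrm{He}_k(x)$ denotes the monic probabilists' Hermite polynomial of degree $k$. $\mathrm{He}_{(n,2)}(x)=\mathrm{Wr}[\mathrm{He}_2,\mathrm{He}_{n+1}]/(n-1)$ (the Wronskian Hermite polynomial of the partition $(n,2)$, whose degree sequence is $(2,n+1)$), a monic integer polynomial of degree $n+2$. For $n$ odd, $\mathrm{He}_{(n,2)}(x)=x\,R_{(n,2)}(x)$ with $R_{(n,2)}\in\mathbb{Z}[x]$, $R_{(n,2)}(0)\ne0$. For $G(x)=\sum_{i=0}^N a_ix^i\in\mathbb{Z}[x]$ with $a_0\neq0$ and a prime $p$, the Newton polygon of $G$ with respect to $p$ is the lower convex hull of the points $(i,\nu_p(a_{N-i}))$, $0\le i\le N$, $a_{N-i}\ne0$ ($\nu_p$ the $p$-adic valuation); its right-most edge is the edge ending at $(N,\nu_p(a_0))$. *)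

(* Defs.v *)
From HB Require Import structures.
From mathcomp Require Import all_boot all_order all_algebra.
Set Implicit Arguments. Unset Strict Implicit. Unset Printing Implicit Defensive.
Import Order.TTheory GRing.Theory Num.Theory.
Local Open Scope ring_scope.

(* herm_pair k = (He_k, He_(k+1)), using He_0 = 1, He_1 = x,
   He_(k+2) = x He_(k+1) - (k+1) He_k  (monic probabilists' Hermite). *)
Fixpoint herm_pair (k : nat) : {poly int} * {poly int} :=
  match k with
  | 0%N => (1, 'X)
  | k'.+1 => let (a, b) := herm_pair k' in (b, 'X * b - a *+ k'.+1)
  end.

Definition He (k : nat) : {poly int} := (herm_pair k).1.

Definition Wr2 (f g : {poly int}) : {poly int} := f * g^`() - f^`() * g.

(* He_(n,2) = Wr[He_2, He_(n+1)] / (n-1); the division is exact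
   (the result lies in Z[x]), performed coefficientwise in int. *)
Definition He_n2 (n : nat) : {poly int} :=
  let W := Wr2 (He 2) (He n.+1) in
  \poly_(i < size W) ((W`_i %/ (n%:Z - 1))%Z).

(* R_(n,2) = He_(n,2) / x (for odd n, He_(n,2)(0) = 0). *)
Definition R_n2 (n : nat) : {poly int} := drop_poly 1 (He_n2 n).

Definition nu (p : nat) (a : int) : nat := logn p `|a|%N.

(* s is the slope of the right-most edge of the Newton polygon of G w.r.t. p,
   i.e. of the lower convex hull of the points (i, nu_p(a_(N-i))), a_(N-i) <> 0,
   0 <= i <= N: the edge ending at (N, nu_p(a_0)) is supported by the line
   through (N, nu_p(a_0)) of slope s, which lies weakly below every point and
   passes through some other point (i, nu_p(a_(N-i))) with i < N. *)
Definition rightmost_edge_slope (p : nat) (G : {poly int}) (s : rat) : Prop :=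
  let N := (size G).-1 in
  (forall i : nat, (i <= N)%N -> G`_(N - i) != 0 ->
      (nu p G`_0)%:R - s * (N - i)%:R <= (nu p G`_(N - i))%:R :> rat)
  /\ (exists2 i : nat, (i < N)%N &
      G`_(N - i) != 0 /\
      (nu p G`_(N - i))%:R = (nu p G`_0)%:R - s * (N - i)%:R :> rat).

(* Main.v *)
Require Import Defs.
From HB Require Import structures.
From mathcomp Require Import all_boot all_order all_algebra.
From mathcomp Require Import ring lra zify.
Import Order.TTheory GRing.Theory Num.Theory.
Local Open Scope ring_scope.

Lemma He0 : He 0 = 1. Proof. by []. Qed.
Lemma He1 : He 1 = 'X. Proof. by []. Qed.
Lemma HeSS k : He k.+2 = 'X * He k.+1 - He k *+ k.+1.
Proof.
rewrite /He /=; case: (herm_pair k) => a b /=. by [].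
Qed.

Lemma He_coef0 k i : ((k < i)%N || odd (k + i)) -> (He k)`_i = 0.
Proof.
elim: k {-2}k (leqnn k) i => [|N IH] k hk i.
  rewrite leqn0 in hk; move/eqP: hk => ->; rewrite He0 coefC.
  by case: i => //.
case: k hk => [|[|k]] hk.
- rewrite He0 coefC; by case: i.
- rewrite He1 coefX; case: i => [|[|i]] //=.
- rewrite HeSS coefB coefXM coefMn => h.
  have e1 : (He k)`_i = 0.
    apply: IH; first lia.
    case/orP: h => h; first by rewrite (_ : (k < i)%N) //; lia.
    have -> : odd (k+i) = odd (k.+2+i) by rewrite addSn addSn /= negbK.
    by rewrite h orbT.
  rewrite e1 mul0rn subr0.
  case: i h e1 => [|i] h e1 //=.
  apply: IH; first lia.
  case/orP: h => h; first by rewrite (_ : (k.+1 < i)%N) //; lia.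
  have -> : odd (k.+1+i) = odd (k.+2+i.+1) by rewrite !addSn !addnS /= negbK.
  by rewrite h orbT.
Qed.

Lemma He_lead k : (He k)`_k = 1.
Proof.
elim: k {-2}k (leqnn k) => [|N IH] k hk.
  by rewrite leqn0 in hk; move/eqP: hk => ->; rewrite He0 coefC.
case: k hk => [|[|k]] hk.
- by rewrite He0 coefC.
- by rewrite He1 coefX.
- rewrite HeSS coefB coefXM coefMn /= IH; last lia.
  by rewrite He_coef0 ?mul0rn ?subr0 //; apply/orP; left; lia.
Qed.

Lemma He_coef i j :
  (He (i + 2 * j))`_i * (j`! * i`! * 2 ^ j)%:R = (-1) ^+ j * ((i + 2 * j)`!)%:R.
Proof.
elim: j i => [|j IH] i.
  by rewrite muln0 addn0 He_lead expr0 !mul1r fact0 mul1n expn0 muln1.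
elim: i => [|i IHi].
  have -> : (0 + 2 * j.+1 = (0 + 2 * j).+2)%N by lia.
  rewrite HeSS coefB coefXM coefMn mulrBl /= mul0r sub0r.
  rewrite -[_ *+ _]mulr_natr -mulrA -[_%:R * _%:R]natrM.
  have -> : ((0 + 2 * j).+1 * (j.+1`! * 0`! * 2 ^ j.+1) = (j`! * 0`! * 2 ^ j) * ((0 + 2 * j).+1 * (2 * j.+1)))%N.
    rewrite factS expnS; ring.
  rewrite natrM mulrA IH (factS (0 + 2 * j).+1) factS !natrM exprS add0n; ring.
have -> : (i.+1 + 2 * j.+1 = (i.+1 + 2 * j).+2)%N by lia.
rewrite HeSS coefB coefXM coefMn mulrBl.
have E2 : (He (i.+1 + 2 * j))`_i.+1 *+ (i.+1 + 2 * j).+1 * (j.+1`! * i.+1`! * 2 ^ j.+1)%:R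
   = - ((-1) ^+ j.+1 * ((i.+1 + 2 * j).+1`!)%:R * (2 * j.+1)%:R).
  rewrite -[_ *+ _]mulr_natr -mulrA -[_%:R * _%:R]natrM.
  have -> : ((i.+1 + 2 * j).+1 * (j.+1`! * i.+1`! * 2 ^ j.+1) = (j`! * i.+1`! * 2 ^ j) * ((i.+1 + 2 * j).+1 * (2 * j.+1)))%N.
    rewrite factS expnS; ring.
  rewrite natrM mulrA IH factS !natrM exprS; ring.
rewrite E2.
have E1 : (He (i.+1 + 2 * j).+1)`_i * (j.+1`! * i.+1`! * 2 ^ j.+1)%:R
   = (-1) ^+ j.+1 * ((i.+1 + 2 * j).+1`!)%:R * i.+1%:R.
  have -> : ((i.+1 + 2 * j).+1 = i + 2 * j.+1)%N by lia.
  rewrite (factS i) (_ : (j.+1`! * (i.+1 * i`!) * 2 ^ j.+1 = (j.+1`! * i`! * 2 ^ j.+1) * i.+1)%N); last ring.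
  by rewrite natrM mulrA IHi.
rewrite E1 opprK.
have HF : (((i.+1 + 2 * j).+2)`! = (i.+1 + 2 * j.+1) * ((i.+1 + 2 * j).+1)`!)%N.
  by rewrite [LHS]factS (_ : ((i.+1 + 2 * j).+2 = i.+1 + 2 * j.+1)%N) //; lia.
move: HF; move: (((i.+1 + 2 * j).+2)`!) (((i.+1 + 2 * j).+1)`!) => G F HF.
rewrite HF; ring.
Qed.

Lemma He_deriv k : (He k.+1)^`() = He k *+ k.+1.
Proof.
elim: k {-2}k (leqnn k) => [|N IH] k hk.
  by rewrite leqn0 in hk; move/eqP: hk => ->; rewrite He1 He0 derivX.
case: k hk => [|k] hk.
  by rewrite He1 He0 derivX.
rewrite HeSS derivB derivM derivX derivMn (IH k); last lia.
case: k hk => [|k] hk.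
  by rewrite He0 He1 derivC; ring.
rewrite (IH k); last lia.
rewrite HeSS; ring.
Qed.

Lemma Wr_eq m :
  Wr2 (He 2) (He m.+3) = (('X * 'X + 1) * He m.+2 + He m *+ (2 * m.+2)) *+ m.+1.
Proof.
rewrite /Wr2 He_deriv He_deriv.
have -> : He 1 = 'X by [].
rewrite (HeSS m.+1) (HeSS m) (HeSS 0) He0 He1.
ring.
Qed.

Lemma He_n2_eq m : He_n2 m.+2 = ('X * 'X + 1) * He m.+2 + He m *+ (2 * m.+2).
Proof.
apply/polyP => i; rewrite /He_n2 coef_poly Wr_eq.
have hm : ((m.+2)%:Z - 1 = m.+1%:R :> int) by ring.
rewrite hm.
case: ltnP => h.
  by rewrite coefMn -[_ *+ m.+1]mulr_natl mulKz // pnatr_eq0.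
have := nth_default 0 h; rewrite coefMn => /eqP.
rewrite -mulr_natl mulf_eq0 => /orP [|/eqP -> //].
by rewrite pnatr_eq0.
Qed.

Lemma Rcoef K j : (R_n2 (2 * K + 3))`_j =
  ('X * ('X * He (2 * K + 3)))`_(j + 1) + (He (2 * K + 3))`_(j + 1)
   + (He (2 * K + 1))`_(j + 1) *+ (2 * (2 * K + 3)).
Proof.
have e : (2 * K + 3 = (2 * K + 1).+2)%N by lia.
rewrite /R_n2 coef_drop_poly e He_n2_eq coefD coefMn mulrDl mul1r coefD mulrA.
by [].
Qed.

Lemma LA K t u : (t + u = K.+2)%N ->
  (He (2 * K + 3))`_(2 * t + 1) * (u`! * (2 * t + 1)`! * 2 ^ u)%:R
  = - (2 * u%:R) * ((-1) ^+ u * ((2 * K + 3)`!)%:R).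
Proof.
case: u => [|u] h.
  rewrite He_coef0 ?mul0r; last by apply/orP; left; lia.
  by [].
have e : (2 * K + 3 = (2 * t + 1) + 2 * u)%N by lia.
rewrite e (_ : (u.+1`! * (2 * t + 1)`! * 2 ^ u.+1 = (u`! * (2 * t + 1)`! * 2 ^ u) * (2 * u.+1))%N); last by rewrite factS expnS; ring.
rewrite (natrM _ (u`! * (2 * t + 1)`! * 2 ^ u) (2 * u.+1)) mulrA He_coef exprS; ring.
Qed.

Lemma LB K t u : (t.+1 + u = K.+2)%N ->
  (He (2 * K + 3))`_(2 * t + 1) * (u`! * (2 * t.+1 + 1)`! * 2 ^ u)%:R
  = (2 * t.+1%:R * (2 * t.+1%:R + 1)) * ((-1) ^+ u * ((2 * K + 3)`!)%:R).
Proof.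
move=> h.
have e : (2 * K + 3 = (2 * t + 1) + 2 * u)%N by lia.
have ef : ((2 * t.+1 + 1)`! = (2 * t + 3) * (2 * t + 2) * (2 * t + 1)`!)%N.
  have -> : (2 * t.+1 + 1 = (2 * t + 1).+2)%N by lia.
  rewrite factS factS; lia.
rewrite e ef (_ : (u`! * ((2 * t + 3) * (2 * t + 2) * (2 * t + 1)`!) * 2 ^ u = (u`! * (2 * t + 1)`! * 2 ^ u) * ((2 * t + 3) * (2 * t + 2)))%N); last by ring.
rewrite (natrM _ (u`! * (2 * t + 1)`! * 2 ^ u)) mulrA He_coef; ring.
Qed.

Lemma LC K t u : (t + u = K.+2)%N ->
  (He (2 * K + 1))`_(2 * t + 1) * (u`! * (2 * t + 1)`! * 2 ^ u)%:R
  = (4 * u%:R * (u%:R - 1)) * ((-1) ^+ u * ((2 * K + 1)`!)%:R).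
Proof.
case: u => [|[|u]] h.
- rewrite He_coef0 ?mul0r; last by apply/orP; left; lia.
  by [].
- rewrite He_coef0 ?mul0r; last by apply/orP; left; lia.
  by [].
have e : (2 * K + 1 = (2 * t + 1) + 2 * u)%N by lia.
rewrite e (_ : (u.+2`! * (2 * t + 1)`! * 2 ^ u.+2 = (u`! * (2 * t + 1)`! * 2 ^ u) * (4 * u.+2 * u.+1))%N); last by rewrite !factS !expnS; ring.
rewrite (natrM _ (u`! * (2 * t + 1)`! * 2 ^ u)) mulrA He_coef !exprS; ring.
Qed.

Lemma key K t u : (t + u = K.+2)%N ->
  (R_n2 (2 * K + 3))`_(2 * t) * (u`! * (2 * t + 1)`! * 2 ^ u)%:R
  = (-1) ^+ u * ((2 * K + 1)`!)%:R * (2 * K + 3)%:R * 4 * K.+2%:R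
     * (2 * t%:R ^+ 2 - 2 * t%:R + K%:R + 1).
Proof.
move=> h.
have hu : (u%:R : int) = K%:R + 2 - t%:R.
  have e2 : u = (K.+2 - t)%N by lia.
  rewrite e2 natrB; last lia.
  ring.
have HF : (((2 * K + 3)`!)%:R : int) = (2 * K + 3)%:R * (2 * K + 2)%:R * ((2 * K + 1)`!)%:R.
  have -> : (2 * K + 3 = (2 * K + 1).+2)%N by lia.
  rewrite factS factS; ring.
rewrite Rcoef !mulrDl mulrnAl (LA _ _ _ h) (LC _ _ _ h).
case: t h hu => [|t] h hu.
  rewrite coefXM /= coefXM /= mul0r add0r HF hu; ring.
rewrite coefXM (_ : (2 * t.+1 + 1 == 0)%N = false); last by rewrite addn1.
rewrite coefXM (_ : ((2 * t.+1 + 1).-1 == 0)%N = false); last by rewrite addn1 /= mulnS.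
have e : ((2 * t.+1 + 1).-1.-1 = 2 * t + 1)%N by lia.
rewrite e (LB _ _ _ h) HF hu; ring.
Qed.

Section NatPart.
Local Open Scope nat_scope.

Lemma v3_fact_rec k : logn 3 k`! = k %/ 3 + logn 3 (k %/ 3)`!.
Proof.
elim: k => [|k IH]; first by rewrite fact0 logn1.
rewrite factS lognM // ?fact_gt0 // IH.
have [d3|nd3] := boolP (3 %| k.+1).
  move: d3 => /dvdnP [q hq].
  have hq0 : 0 < q by case: q hq => //; rewrite mul0n.
  have e1 : k %/ 3 = q.-1.
    have -> : k = q.-1 * 3 + 2 by lia.
    by rewrite divnMDl // (divn_small (isT : 2 < 3)) addn0.
  have e2 : k.+1 %/ 3 = q by rewrite hq mulnK.
  rewrite e1 e2 hq lognM // (logn_prime 3 (isT : prime 3)) eqxx.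
  case: q hq hq0 e1 e2 => [|q] //= hq _ _ _.
  rewrite factS lognM ?fact_gt0 //. lia.
rewrite logn_coprime ?prime_coprime //.
have e : k.+1 %/ 3 = k %/ 3.
  move: nd3; rewrite /dvdn => nd3.
  have := divn_eq k.+1 3; have := divn_eq k 3; have := ltn_pmod k (isT : 0 < 3).
  have := ltn_pmod k.+1 (isT : 0 < 3).
  move: nd3 => /eqP.
  move=> ? ? ? ? ?; nia.
by rewrite e add0n.
Qed.

Lemma v3_fact_bound k : 0 < k -> (2 * logn 3 k`!).+1 <= k.
Proof.
elim: k {-2}k (leqnn k) => [|N IH] k hk hk0; first by lia.
rewrite v3_fact_rec.
have hq : k %/ 3 < k by rewrite ltn_Pdiv.
have hq3 : 3 * (k %/ 3) <= k by rewrite mulnC leq_divM.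
case q0 : (k %/ 3) => [|q].
  by rewrite fact0 logn1; lia.
have := IH q.+1 ltac:(lia) isT.
rewrite -q0 in hq3 *. lia.
Qed.

Lemma v3_fact_mono m n : (m <= n)%N -> (logn 3 m`! <= logn 3 n`!)%N.
Proof.
elim: n => [|n IH] h; first by rewrite leqn0 in h; move/eqP: h => ->.
case: (ltngtP m n.+1) h => // [h|->] _; last by [].
rewrite factS lognM ?fact_gt0 //; have := IH h; lia.
Qed.

End NatPart.

Lemma Rodd K t : (R_n2 (2 * K + 3))`_(2 * t + 1) = 0.
Proof.
rewrite Rcoef !He_coef0 ?mul0rn ?addr0; first last.
- by apply/orP; right; rewrite !oddD; case: (odd K); case: (odd t).
- by apply/orP; right; rewrite !oddD; case: (odd K); case: (odd t).
rewrite coefXM (_ : (2 * t + 1 + 1 == 0)%N = false); last by rewrite addn1.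
rewrite coefXM.
case: (_ == 0)%N => //.
rewrite He_coef0 //; apply/orP; right.
have -> : ((2 * t + 1 + 1).-1.-1 = 2 * t)%N by lia.
by rewrite !oddD; case: (odd K); case: (odd t).
Qed.

Lemma Rhigh K j : (2 * K + 4 < j)%N -> (R_n2 (2 * K + 3))`_j = 0.
Proof.
move=> h; rewrite Rcoef !He_coef0 ?mul0rn ?addr0; first last.
- by apply/orP; left; lia.
- by apply/orP; left; lia.
rewrite coefXM; case: (_ == 0)%N => //.
rewrite coefXM; case: (_ == 0)%N => //.
by rewrite He_coef0 //; apply/orP; left; lia.
Qed.

Lemma keyN K t u : (t + u = K.+2)%N ->
  (absz ((R_n2 (2 * K + 3))`_(2 * t))%R * (u`! * (2 * t + 1)`! * 2 ^ u))%N
  = ((2 * K + 1)`! * (2 * K + 3) * 4 * K.+2 * (2 * t * t.-1 + K.+1))%N.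
Proof.
move=> h; have := congr1 (fun z : int => `|z|%N) (key _ _ _ h).
have -> : ((-1) ^+ u * ((2 * K + 1)`!)%:R * (2 * K + 3)%:R * 4 * K.+2%:R
     * (2 * t%:R ^+ 2 - 2 * t%:R + K%:R + 1) : int)
   = (-1) ^+ u * ((2 * K + 1)`! * (2 * K + 3) * 4 * K.+2 * (2 * t * t.-1 + K.+1))%:R.
  by case: t {h}; [ring | move=> t /=; ring].
by rewrite abszM abszMsign !natz !absz_nat.
Qed.

Lemma vEq K t u : (t + u = K.+2)%N ->
  (nu 3 (R_n2 (2 * K + 3))`_(2 * t) + logn 3 u`! + logn 3 (2 * t + 1)`!
   = logn 3 (2 * K + 1)`! + logn 3 (2 * K + 3) + logn 3 K.+2
     + logn 3 (2 * t * t.-1 + K.+1))%N.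
Proof.
move=> h; have e := keyN _ _ _ h.
have hR : (0 < absz ((R_n2 (2 * K + 3))`_(2 * t))%R)%N.
  have hY : (0 < (2 * K + 1)`! * (2 * K + 3) * 4 * K.+2 * (2 * t * t.-1 + K.+1))%N.
    by rewrite !muln_gt0 fact_gt0 /=; lia.
  rewrite lt0n; apply/negP => /eqP h0; move: e hY; rewrite h0 mul0n => <-.
  by [].
have := congr1 (logn 3) e.
rewrite /nu !lognM ?muln_gt0 ?fact_gt0 ?expn_gt0 ?hR //=; try lia.
rewrite lognX (logn_coprime (isT : coprime 3 2)) (logn_coprime (isT : coprime 3 4)).
lia.
by rewrite addnS.
Qed.

Lemma Rnz K t : (t <= K.+2)%N -> (R_n2 (2 * K + 3))`_(2 * t) != 0.
Proof.
move=> ht; have h : (t + (K.+2 - t) = K.+2)%N by lia.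
have hY : (0 < (2 * K + 1)`! * (2 * K + 3) * 4 * K.+2 * (2 * t * t.-1 + K.+1))%N.
  by rewrite !muln_gt0 fact_gt0 /=; lia.
apply/eqP => h0; move: (keyN _ _ _ h) hY; rewrite h0 mul0n => <-.
by [].
Qed.

Lemma sizeR K : size (R_n2 (2 * K + 3)) = (2 * K + 5)%N.
Proof.
apply/eqP; rewrite eqn_leq; apply/andP; split.
  by apply/leq_sizeP => j hj; apply: Rhigh; lia.
rewrite leqNgt; apply/negP => hs.
have := Rnz K K.+2 (leqnn _); rewrite (_ : (2 * K.+2 = 2 * K + 4)%N); last lia.
have hs' : (size (R_n2 (2 * K + 3)) <= 2 * K + 4)%N by lia.
by move/leq_sizeP: hs' => /(_ (2 * K + 4)%N (leqnn _)) ->; rewrite eqxx.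
Qed.

Lemma factS2 K : (logn 3 K.+2`! = logn 3 K.+2 + logn 3 K.+1 + logn 3 K`!)%N.
Proof. by rewrite factS lognM ?fact_gt0 // factS lognM ?fact_gt0 // addnA. Qed.

Lemma e0lem K : (nu 3 (R_n2 (2 * K + 3))`_(2 * 0) + logn 3 K.+2 + logn 3 K.+1 + logn 3 K`!
   = logn 3 (2 * K + 1)`! + logn 3 (2 * K + 3) + logn 3 K.+2 + logn 3 K.+1)%N.
Proof.
have := vEq K 0 K.+2 erefl.
rewrite (_ : (2 * 0 * 0.-1 + K.+1 = K.+1)%N) // (_ : (2 * 0 + 1)`! = 1)%N // logn1 addn0.
rewrite factS2; lia.
Qed.

Lemma ineqT K t : (1 <= t <= K.+2)%N ->
  (nu 3 (R_n2 (2 * K + 3))`_(2 * 0) + logn 3 K.+2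
    <= nu 3 (R_n2 (2 * K + 3))`_(2 * t) + t)%N.
Proof.
move=> /andP [h1 h2].
have e0 := e0lem K.
have htu : (t + (K.+2 - t) = K.+2)%N by lia.
have et := vEq K t (K.+2 - t) htu.
have hp : (0 < 2 * t + 1)%N by rewrite addn1.
have hL := v3_fact_bound (2 * t + 1) hp.

case: t h1 h2 et hL htu hp => [|[|t]] // h1 h2 et hL _ _.
  move: et; rewrite (_ : (2 * 1 * 1.-1 + K.+1 = K.+1)%N) // (_ : (K.+2 - 1 = K.+1)%N) //.
  rewrite factS lognM ?fact_gt0 //; lia.
have hle : (K.+2 - t.+2 <= K)%N by lia.
have := v3_fact_mono _ _ hle; lia.
Qed.

Lemma ineq1 K :
  (nu 3 (R_n2 (2 * K + 3))`_(2 * 0) + logn 3 K.+2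
    = nu 3 (R_n2 (2 * K + 3))`_(2 * 1) + 1)%N.
Proof.
have e0 := e0lem K.
have et := vEq K 1 K.+1 (erefl _).
move: et; rewrite (_ : (2 * 1 * 1.-1 + K.+1 = K.+1)%N) // factS lognM ?fact_gt0 //.
rewrite (_ : logn 3 (2 * 1 + 1)`! = 1)%N //.
lia.
Qed.

Lemma argmax (f : nat -> rat) M : (0 < M)%N ->
  exists2 t0, (0 < t0 <= M)%N & forall t, (0 < t <= M)%N -> f t <= f t0.
Proof.
elim: M => [|M IH] // _.
case: M IH => [|M] IH.
  exists 1%N; first by [].
  move=> t /andP [ht1 ht2]; have -> : t = 1%N by lia. by [].
have [t0 /andP [h01 h02] hmax] := IH isT.
case: (leP (f M.+2) (f t0)) => hc.
  exists t0.
    apply/andP; split; lia.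
  move=> t /andP [ht1 ht2]; case: (t =P M.+2) => [->//|ne]; apply: hmax; apply/andP; split; lia.
exists M.+2; first by rewrite /= leqnn.
move=> t /andP [ht1 ht2]; case: (t =P M.+2) => [->//|ne].
apply: le_trans (hmax t _) (ltW hc); apply/andP; split; lia.
Qed.

Theorem mainTheorem18 (n : nat) (hn3 : (3 <= n)%N) (hodd : odd n) :
  exists s : rat, rightmost_edge_slope 3 (R_n2 n) s /\
    ((3 %| n.+1)%N -> s < 1 / 2) /\
    (~~ (3 %| n.+1)%N -> s = 1 / 2).
Proof.
have [K hK] : exists K, n = (2 * K + 3)%N.
  exists (n./2 - 1)%N; have := odd_double_half n; rewrite hodd -muln2; lia.
subst n.
have hdiv : (3 %| (2 * K + 3).+1)%N = (0 < logn 3 K.+2)%N.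
  rewrite (_ : ((2 * K + 3).+1 = 2 * K.+2)%N); last lia.
  by rewrite Euclid_dvdM // logn_gt0 mem_primes.
rewrite hdiv.
set G := R_n2 (2 * K + 3).
set V := fun t => nu 3 G`_(2 * t).
have hN : (size G).-1 = (2 * K + 4)%N by rewrite /G sizeR; lia.
have hcoef : forall j, (j <= 2 * K + 4)%N -> G`_j != 0 -> exists2 t, j = (2 * t)%N & (t <= K.+2)%N.
  move=> j hj; have := odd_double_half j; case: (odd j) => /= e.
    by rewrite -e -muln2 mulnC addnC (Rodd K) eqxx.
  move=> _; exists j./2; lia.
have V0 : nu 3 G`_0 = V 0%N by [].
have hineq : forall t, (0 < t)%N -> (t <= K.+2)%N -> (V 0%N + logn 3 K.+2 <= V t + t)%N.
  by move=> t ht ht'; apply: ineqT; apply/andP; split.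
have h1 : (V 0%N + logn 3 K.+2 = V 1%N + 1)%N := ineq1 K.
have hnz : forall t, (t <= K.+2)%N -> G`_(2 * t) != 0 := Rnz K.
rewrite /rightmost_edge_slope hN.
case: (posnP (logn 3 K.+2)) => hv.
  exists (1 / 2); split; last by split.
  split.
    move=> i hi hnz'.
    have [t ht htK] := hcoef (2 * K + 4 - i)%N (leq_subr _ _) hnz'.
    rewrite ht V0.
    case: (posnP t) => [->|tpos]; first by rewrite muln0 mulr0 subr0.
    have := hineq t tpos htK; rewrite hv addn0 => hle.
    have hq : ((V 0%N)%:R <= (V t + t)%:R :> rat) by rewrite ler_nat.
    rewrite natrD in hq.
    rewrite (_ : 1 / 2 * (2 * t)%:R = t%:R :> rat); last by rewrite natrM; field.
    rewrite /V in hq; lra.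
  exists (2 * K + 2)%N; first lia.
  rewrite (_ : (2 * K + 4 - (2 * K + 2) = 2 * 1)%N); last lia.
  split; first by apply: hnz.
  rewrite V0 -/(V 1%N).
  have hq : ((V 0%N)%:R = (V 1%N + 1)%:R :> rat) by rewrite -h1 hv addn0.
  rewrite natrD in hq.
  rewrite (_ : 1 / 2 * (2 * 1)%:R = 1 :> rat); last by field.
  lra.
pose f := fun t : nat => ((V 0%N)%:R - (V t)%:R) / (2 * t)%:R : rat.
have [t0 /andP [ht01 ht02] hmax] := argmax f K.+2 (ltn0Sn K.+1).
have hft : forall t, (0 < t)%N -> f t * (2 * t)%:R = (V 0%N)%:R - (V t)%:R.
  move=> t ht; rewrite /f mulfVK // pnatr_eq0; lia.
exists (f t0); split; last first.
  split; last by [].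
  move=> _.
  have := hineq t0 ht01 ht02 => hle.
  have hq : ((V 0%N + 1)%:R <= (V t0 + t0)%:R :> rat).
    rewrite ler_nat; lia.
  rewrite !natrD in hq.
  rewrite /f ltr_pdivrMr; last by rewrite ltr0n; lia.
  rewrite natrM; lra.
split.
  move=> i hi hnz'.
  have [t ht htK] := hcoef (2 * K + 4 - i)%N (leq_subr _ _) hnz'.
  rewrite ht V0.
  case: (posnP t) => [->|tpos]; first by rewrite muln0 mulr0 subr0.
  have hm := hmax t ltac:(apply/andP; split; lia).
  have hle : f t * (2 * t)%:R <= f t0 * (2 * t)%:R by rewrite ler_wpM2r // ler0n.
  rewrite hft // in hle.
  rewrite /V in hle; lra.
exists (2 * K + 4 - 2 * t0)%N; first lia.
rewrite (_ : (2 * K + 4 - (2 * K + 4 - 2 * t0) = 2 * t0)%N); last lia.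
split; first by apply: hnz.
rewrite V0 hft //.
rewrite /V; lra.
Qed.
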